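(* Let $s>0$, $\kappa>0$, and put $q=e^{-2s\kappa^2}\in(0,1)$. Let $b\in\mathbb{C}$ and $n\ge0$. Then for every $y\in\mathbb{R}$, $$\frac{1}{\sqrt{2\pi s}}\int_{\mathbb{R}}H_n\big(b\,e^{i\kappa x},s\,\big|\,q\big)\,e^{ixy-\frac{x^2}{2s}}\,dx=q^{\frac{n^2}{4}}\,H_n\big(b\,e^{-s\kappa y},\,q^{n-3}s\,\big|\,q^{-1}\big)\,e^{-\frac{sy^2}{2}}.$$
   Context: For $r>0$, $r\neq1$ and $m\ge0$: $\{m\}_r=\frac{1-r^m}{1-r}$, $\{m\}_r!=\prod_{j=1}^m\{j\}_r$, $\{2m\}_r!!=\prod_{j=1}^m\{2j\}_r$, $\{0\}_r!=\{0\}_r!!=1$. For $0\le k\le\lfloor n/2\rfloor$, $c_{n,k}(r)=\frac{(-1)^kr^{k(k-1)}\{n\}_r!}{\{n-2k\}_r!\,\{2k\}_r!!}$, and $$H_n(z,s|r)=\sum_{k=0}^{\lfloor n/2\rfloor}c_{n,k}(r)\,s^kz^{n-2k}\quad(z\in\mathbb{C});$$ the left side uses $r=q$, the right side uses $r=q^{-1}$. *)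

(* Defs.v *)
From Stdlib Require Import Reals Lra.
Open Scope R_scope.

Definition Cplx := (R * R)%type.
Definition Cre (z : Cplx) : R := fst z.
Definition Cim (z : Cplx) : R := snd z.
Definition Cadd (z w : Cplx) : Cplx := (fst z + fst w, snd z + snd w).
Definition Cmul (z w : Cplx) : Cplx :=
  (fst z * fst w - snd z * snd w, fst z * snd w + snd z * fst w).
Definition Cscal (a : R) (z : Cplx) : Cplx := (a * fst z, a * snd z).
Definition C0 : Cplx := (0, 0).
Definition C1 : Cplx := (1, 0).
Fixpoint Cpow (z : Cplx) (m : nat) : Cplx :=
  match m with O => C1 | S m' => Cmul z (Cpow z m') end.
Definition Cexpi (t : R) : Cplx := (cos t, sin t).
Fixpoint Csum (f : nat -> Cplx) (m : nat) : Cplx :=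
  match m with O => C0 | S m' => Cadd (Csum f m') (f m') end.

Definition qnum (r : R) (m : nat) : R := (1 - r ^ m) / (1 - r).
Fixpoint qfact (r : R) (m : nat) : R :=
  match m with O => 1 | S m' => qfact r m' * qnum r (S m') end.
(* qdfact r m = {2m}_r!! = prod_{j=1}^m {2j}_r *)
Fixpoint qdfact (r : R) (m : nat) : R :=
  match m with O => 1 | S m' => qdfact r m' * qnum r (2 * S m') end.

Definition cnk (n k : nat) (r : R) : R :=
  (-1) ^ k * r ^ (k * (k - 1)) * qfact r n / (qfact r (n - 2 * k) * qdfact r k).

Definition Hq (n : nat) (z : Cplx) (s r : R) : Cplx :=
  Csum (fun k => Cscal (cnk n k r * s ^ k) (Cpow z (n - 2 * k))) (S (Nat.div2 n)).

Definition is_RInt_R (f : R -> R) (l : R) : Prop :=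
  (forall a b : R, a <= b -> inhabited (Riemann_integrable f a b)) /\
  (forall eps : R, 0 < eps -> exists M : R, forall (a b : R)
     (pr : Riemann_integrable f a b),
     a <= - M -> M <= b -> Rabs (RiemannInt pr - l) < eps).

Definition is_CInt_R (f : R -> Cplx) (l : Cplx) : Prop :=
  is_RInt_R (fun x => Cre (f x)) (Cre l) /\ is_RInt_R (fun x => Cim (f x)) (Cim l).

(* Main.v *)
Require Import Defs.
From Stdlib Require Import Reals.
From Coquelicot Require Import Coquelicot.
From Stdlib Require Import Lra Lia.
Import Defs.
Open Scope R_scope.

Lemma c2d_pow (f : R -> R -> R) n x y :
  continuity_2d_pt f x y -> continuity_2d_pt (fun u v => f u v ^ n) x y.
Proof.
intros H; induction n as [|n IH].
- apply (continuity_2d_pt_ext (fun _ _ => 1)); [intros; reflexivity|apply continuity_2d_pt_const].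
- apply (continuity_2d_pt_ext (fun u v => f u v * f u v ^ n)); [intros; reflexivity|].
  now apply continuity_2d_pt_mult.
Qed.

Lemma continuity_exp : continuity exp.
Proof. apply derivable_continuous, derivable_exp. Qed.

Ltac c2d :=
  repeat first
   [ apply continuity_2d_pt_id1 | apply continuity_2d_pt_id2
   | apply continuity_2d_pt_mult | apply continuity_2d_pt_plus
   | apply continuity_2d_pt_minus | apply continuity_2d_pt_opp
   | apply c2d_pow
   | apply (continuity_1d_2d_pt_comp exp); [apply continuity_exp|]
   | apply (continuity_1d_2d_pt_comp cos); [apply continuity_cos|]
   | apply (continuity_1d_2d_pt_comp sin); [apply continuity_sin|]
   | apply continuity_2d_pt_const ].

Lemma param_deriv (f df : R -> R -> R) a b x :
  (forall u t, is_derive (fun z => f z t) u (df u t)) ->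
  (forall u t, continuity_2d_pt df u t) ->
  (forall u, ex_RInt (f u) a b) ->
  is_derive (fun u => RInt (f u) a b) x (RInt (df x) a b).
Proof.
intros Hd Hc Hi.
assert (HD : forall u t, Derive (fun z => f z t) u = df u t).
{ intros; apply is_derive_unique, Hd. }
assert (E : RInt (df x) a b = RInt (fun t => Derive (fun u => f u t) x) a b).
{ apply RInt_ext; intros; now rewrite HD. }
rewrite E.
apply (is_derive_RInt_param f a b x).
- apply filter_forall; intros; eexists; apply Hd.
- intros t _. apply (continuity_2d_pt_ext df); [intros; now rewrite HD|apply Hc].
- apply filter_forall; intros; apply Hi.
Qed.

Lemma excont (f : R -> R) x : ex_derive f x -> continuous f x.
Proof. apply (ex_derive_continuous (K:=R_AbsRing) (V:=R_NormedModule)). Qed.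

Lemma cont_ex_RInt (f : R -> R) a b : (forall x, continuous f x) -> ex_RInt f a b.
Proof. intros H; apply (ex_RInt_continuous (V:=R_CompleteNormedModule)); intros; apply H. Qed.

Section Gauss.
Variable al : R.
Hypothesis Hal : 0 < al.

Definition gg (x : R) := exp (- (al * x ^ 2)).
Definition JJ (x : R) : R := RInt gg 0 x.

Lemma gg_cont x : continuous gg x.
Proof. apply excont; unfold gg; auto_derive; auto. Qed.

Lemma gg_ex a b : ex_RInt gg a b.
Proof. apply cont_ex_RInt, gg_cont. Qed.

Lemma gg_pos x : 0 < gg x.
Proof. apply exp_pos. Qed.

Lemma JJ_deriv x : is_derive JJ x (gg x).
Proof.
apply (is_derive_RInt gg JJ 0 x).
- apply filter_forall; intros; apply (RInt_correct (V:=R_CompleteNormedModule)), gg_ex.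
- apply gg_cont.
Qed.

Definition phi (x t : R) := exp (- (al * x ^ 2 * (1 + t ^ 2))) / (1 + t ^ 2).
Definition KK (x : R) : R := RInt (fun t => exp (- (al * (x * t) ^ 2))) 0 1.

Lemma F1_deriv x : is_derive (fun u => RInt (phi u) 0 1) x
   (- (2 * al * x) * exp (- (al * x ^ 2)) * KK x).
Proof.
assert (H := param_deriv phi (fun u t => - (2 * al * u) * exp (- (al * u ^ 2 * (1 + t ^ 2)))) 0 1 x).
replace (- (2 * al * x) * exp (- (al * x ^ 2)) * KK x) with
  (RInt (fun t => - (2 * al * x) * exp (- (al * x ^ 2 * (1 + t ^ 2)))) 0 1).
- apply H.
  + intros u t. unfold phi. auto_derive.
    * nra.
    * change (u^2) with (u*(u*1)); change (t^2) with (t*(t*1)); field; nra.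
  + intros u t. c2d.
  + intros u; apply cont_ex_RInt; intros z; apply excont; unfold phi;
     auto_derive; nra.
- unfold KK. rewrite (RInt_ext _ (fun t => scal (- (2 * al * x) * exp (- (al * x ^ 2))) (exp (- (al * (x * t) ^ 2))))).
  + rewrite (RInt_scal (V:=R_CompleteNormedModule)); [reflexivity|].
    apply cont_ex_RInt; intros z; apply excont; auto_derive; auto.
  + intros t _. unfold scal; simpl; unfold mult; simpl.
    rewrite (Rmult_assoc (- (2 * al * x)) (exp _)), <- exp_plus; f_equal; f_equal; ring.
Qed.

Lemma JJ_KK x : JJ x = x * KK x.
Proof.
unfold JJ, KK.
assert (H := RInt_comp_lin (V:=R_CompleteNormedModule) gg x 0 0 1).
replace (x * 0 + 0) with 0 in H by ring. replace (x * 1 + 0) with x in H by ring.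
rewrite <- H by apply gg_ex.
rewrite (RInt_ext _ (fun y => scal x (exp (- (al * (x * y) ^ 2))))).
- apply (RInt_scal (V:=R_CompleteNormedModule)).
  apply cont_ex_RInt; intros z; apply excont; auto_derive; auto.
- intros t _; unfold gg; do 3 f_equal; ring.
Qed.

Definition hh x := RInt (phi x) 0 1 + al * JJ x ^ 2.

Lemma hh_deriv x : is_derive hh x 0.
Proof.
assert (H : is_derive hh x ((- (2 * al * x) * exp (- (al * x ^ 2)) * KK x) + al * (INR 2 * gg x * JJ x ^ 1))).
{ apply (is_derive_plus (K:=R_AbsRing) (V:=R_NormedModule)); [apply F1_deriv|].
  apply is_derive_scal.
  apply (is_derive_pow (fun y => JJ y) 2 x (gg x)), JJ_deriv. }
replace ((- (2 * al * x) * exp (- (al * x ^ 2)) * KK x) + al * (INR 2 * gg x * JJ x ^ 1)) with 0 in H; auto.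
rewrite JJ_KK; unfold gg; simpl; ring.
Qed.

Lemma hh_const x : hh x = PI / 4.
Proof.
assert (H := is_RInt_derive (V:=R_CompleteNormedModule) hh (fun _ => 0) 0 x).
assert (H1 : is_RInt (fun _ => 0) 0 x (minus (hh x) (hh 0))).
{ apply H; intros; [apply hh_deriv| apply continuous_const]. }
apply (is_RInt_unique (V:=R_CompleteNormedModule)) in H1. rewrite (RInt_const (V:=R_CompleteNormedModule)) in H1.
unfold scal, minus, plus, opp in H1; simpl in H1; unfold mult in H1; simpl in H1.
assert (E : hh x = hh 0) by lra. rewrite E.
unfold hh, JJ. rewrite (RInt_point (V:=R_CompleteNormedModule)).
rewrite (RInt_ext _ (fun t => / (1 + t ^ 2))).
- assert (H2 := is_RInt_derive (V:=R_CompleteNormedModule) atan (fun t => / (1 + t ^ 2)) 0 1).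
  rewrite (is_RInt_unique (V:=R_CompleteNormedModule) _ _ _ _ (H2 ltac:(intros; apply is_derive_Reals, derivable_pt_lim_atan) ltac:(intros; apply excont; auto_derive; nra))).
  rewrite atan_1, atan_0. unfold zero, minus, plus, opp; simpl. ring.
- intros t _; unfold phi. replace (- (al * 0 ^ 2 * (1 + t ^ 2))) with 0 by ring.
  rewrite exp_0; unfold Rdiv; apply Rmult_1_l.
Qed.

Lemma phi_int_bounds x : 0 <= RInt (phi x) 0 1 <= exp (- (al * x ^ 2)).
Proof.
assert (Hex : ex_RInt (phi x) 0 1).
{ apply cont_ex_RInt; intros z; apply excont; unfold phi; auto_derive; nra. }
split.
- apply RInt_ge_0; [lra|auto|]. intros t _; unfold phi.
  apply Rlt_le, Rdiv_lt_0_compat; [apply exp_pos|nra].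
- replace (exp (- (al * x ^ 2))) with (RInt (fun _ => exp (- (al * x ^ 2))) 0 1).
  + apply RInt_le; [lra|auto|apply (ex_RInt_const (V:=R_NormedModule))|].
    intros t Ht; unfold phi.
    assert (Ha : 1 <= 1 + t ^ 2) by nra.
    assert (Hb : exp (- (al * x ^ 2 * (1 + t ^ 2))) <= exp (- (al * x ^ 2))).
    { destruct (Req_dec x 0) as [->|Hx].
      - right; f_equal; ring.
      - left; apply exp_increasing. assert (0 < x ^ 2) by (apply pow2_gt_0; auto). assert (0 < t ^ 2) by (simpl; nra). assert (0 < al * x ^ 2) by nra. nra. }
    apply (Rmult_le_reg_r (1 + t ^ 2)); [lra|].
    unfold Rdiv; rewrite Rmult_assoc, Rinv_l by lra.
    assert (0 < exp (- (al * x ^ 2))) by apply exp_pos. nra.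
  + rewrite (RInt_const (V:=R_CompleteNormedModule)). unfold scal; simpl; unfold mult; simpl; ring.
Qed.

Lemma JJ_ge0 x : 0 <= x -> 0 <= JJ x.
Proof.
intros Hx; apply RInt_ge_0; auto; [apply gg_ex|]. intros; apply Rlt_le, gg_pos.
Qed.

Definition LL := sqrt (PI / al) / 2.

Lemma exp_neg_lt y : 0 < y -> exp (- y) < / y.
Proof.
intros Hy. assert (H := exp_ineq1 y ltac:(lra)).
rewrite exp_Ropp. apply Rinv_lt_contravar; [nra|lra].
Qed.

Lemma gg_small eps : 0 < eps -> exists M, 0 < M /\ forall x, M <= x -> exp (- (al * x ^ 2)) < eps.
Proof.
intros He. exists (1 + / (al * eps)). assert (0 < / (al * eps)) by (apply Rinv_0_lt_compat; nra).
split; [lra|]. intros x Hx.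
assert (Hy : al * (1 + / (al * eps)) <= al * x ^ 2).
{ apply Rmult_le_compat_l; [lra|]. simpl. nra. }
eapply Rlt_le_trans; [apply exp_neg_lt; nra|].
apply Rle_trans with (/ (al * (1 + / (al * eps)))).
- apply Rinv_le_contravar; nra.
- rewrite Rmult_plus_distr_l, Rmult_1_r.
  apply Rle_trans with (/ (al * / (al * eps))).
  + apply Rinv_le_contravar; [|lra]. apply Rmult_lt_0_compat; lra.
  + right. field. split; lra.
Qed.

Lemma LL_pos : 0 < LL.
Proof. unfold LL. assert (0 < sqrt (PI / al)) by (apply sqrt_lt_R0; apply Rdiv_lt_0_compat; [apply PI_RGT_0|lra]). lra. Qed.

Lemma LL_sq : al * LL ^ 2 = PI / 4.
Proof.
unfold LL. replace ((sqrt (PI / al) / 2) ^ 2) with (Rsqr (sqrt (PI / al)) / 4) by (unfold Rsqr; simpl; field).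
rewrite Rsqr_sqrt by (apply Rlt_le, Rdiv_lt_0_compat; [apply PI_RGT_0|lra]). field; lra.
Qed.

Lemma JJ_lim eps : 0 < eps -> exists M, 0 < M /\ forall x, M <= x -> Rabs (JJ x - LL) < eps.
Proof.
intros He. destruct (gg_small (eps * al * LL)) as [M [HM HMx]].
{ assert (H := LL_pos). apply Rmult_lt_0_compat; [nra|lra]. }
exists M; split; auto. intros x Hx.
assert (Hh := hh_const x). unfold hh in Hh.
assert (Hb := phi_int_bounds x). assert (HJ := JJ_ge0 x ltac:(lra)).
assert (HL := LL_pos). assert (HL2 := LL_sq). specialize (HMx x Hx).
assert (Hd : Rabs (JJ x ^ 2 - LL ^ 2) * al <= exp (- (al * x ^ 2))).
{ rewrite Rabs_left1.
  - nra.
  - nra. }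
assert (Hd2 : Rabs (JJ x - LL) * LL <= Rabs (JJ x ^ 2 - LL ^ 2)).
{ replace (JJ x ^ 2 - LL ^ 2) with ((JJ x - LL) * (JJ x + LL)) by ring.
  rewrite Rabs_mult. rewrite (Rabs_right (JJ x + LL)) by lra.
  apply Rmult_le_compat_l; [apply Rabs_pos|lra]. }
assert (Rabs (JJ x - LL) * LL * al < eps * al * LL) by nra.
assert (HH : Rabs (JJ x - LL) * (LL * al) < eps * (LL * al)) by nra.
apply Rmult_lt_reg_r in HH; auto. nra.
Qed.

End Gauss.

Ltac toR := match goal with |- ?a = ?b => change (@eq R a b) end.

Lemma Rint_unfold_scal (a b : R) : scal a b = a * b.
Proof. reflexivity. Qed.

Lemma RInt_even (f : R -> R) A : (forall x, continuous f x) -> (forall x, f (- x) = f x) ->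
  RInt f (- A) 0 = RInt f 0 A.
Proof.
intros Hc He.
assert (H := RInt_comp_lin (V:=R_CompleteNormedModule) f (-1) 0 0 A (cont_ex_RInt _ _ _ Hc)).
replace (-1 * 0 + 0) with 0 in H by ring. replace (-1 * A + 0) with (- A) in H by ring.
rewrite <- (opp_RInt_swap (V:=R_CompleteNormedModule)) by (apply cont_ex_RInt, Hc).
rewrite <- H.
rewrite (RInt_ext _ (fun y => opp (f y))).
- rewrite (RInt_opp (V:=R_CompleteNormedModule)) by (apply cont_ex_RInt, Hc).
  unfold opp; simpl; ring.
- intros x _. toR. rewrite Rint_unfold_scal. replace (-1 * x + 0) with (- x) by ring.
  rewrite He; unfold opp; simpl; ring.
Qed.

Lemma RInt_odd (f : R -> R) A : (forall x, continuous f x) -> (forall x, f (- x) = - f x) ->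
  RInt f (- A) A = 0.
Proof.
intros Hc He.
assert (H := RInt_comp_lin (V:=R_CompleteNormedModule) f (-1) 0 0 A (cont_ex_RInt _ _ _ Hc)).
replace (-1 * 0 + 0) with 0 in H by ring. replace (-1 * A + 0) with (- A) in H by ring.
rewrite <- (RInt_Chasles (V:=R_CompleteNormedModule) f (-A) 0 A) by (apply cont_ex_RInt, Hc).
rewrite <- (opp_RInt_swap (V:=R_CompleteNormedModule)) by (apply cont_ex_RInt, Hc).
rewrite <- H.
rewrite (RInt_ext _ f).
- unfold opp, plus; simpl; ring.
- intros x _. toR. rewrite Rint_unfold_scal. replace (-1 * x + 0) with (- x) by ring.
  rewrite He; ring.
Qed.

Lemma deriv_bound (f df : R -> R) a b C :
  (forall u, is_derive f u (df u)) -> (forall u, continuous df u) ->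
  (forall u, Rmin a b <= u <= Rmax a b -> Rabs (df u) <= C) ->
  Rabs (f b - f a) <= C * Rabs (b - a).
Proof.
intros Hd Hc Hb.
assert (K : forall a b, a <= b -> (forall u, a <= u <= b -> Rabs (df u) <= C) ->
   Rabs (f b - f a) <= C * Rabs (b - a)).
{ clear a b Hb. intros a b Hab Hb.
  assert (H := is_RInt_derive (V:=R_CompleteNormedModule) f df a b (fun x _ => Hd x) (fun x _ => Hc x)).
  apply (is_RInt_unique (V:=R_CompleteNormedModule)) in H.
  assert (H2 := abs_RInt_le_const df a b C Hab (cont_ex_RInt _ _ _ Hc) Hb).
  rewrite H in H2. unfold minus, plus, opp in H2; simpl in H2.
  rewrite (Rabs_right (b - a)) by lra. unfold Rminus in *. lra. }
destruct (Rle_dec a b) as [Hab|Hab].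
- apply K; auto. intros u Hu; apply Hb. rewrite Rmin_left, Rmax_right; lra.
- rewrite <- Rabs_Ropp, Ropp_minus_distr, <- (Rabs_Ropp (b - a)), Ropp_minus_distr.
  apply K; [lra|]. intros u Hu; apply Hb. rewrite Rmin_right, Rmax_left; lra.
Qed.

Section Fourier.
Variable al : R.
Hypothesis Hal : 0 < al.

Definition cosg t x := gg al x * cos (t * x).
Definition sing t x := gg al x * sin (t * x).
Definition GA A t : R := RInt (cosg t) (- A) A.
Definition be := / (4 * al).

Lemma cosg_cont t x : continuous (cosg t) x.
Proof. apply excont; unfold cosg, gg; auto_derive; auto. Qed.
Lemma sing_cont t x : continuous (sing t) x.
Proof. apply excont; unfold sing, gg; auto_derive; auto. Qed.

Lemma gg_even x : gg al (- x) = gg al x.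
Proof. unfold gg; f_equal; ring. Qed.

Lemma GA_deriv A t : is_derive (fun t => GA A t) t
   (RInt (fun x => - (x * gg al x * sin (t * x))) (- A) A).
Proof.
apply (param_deriv (fun u x => gg al x * cos (u * x)) (fun u x => - (x * gg al x * sin (u * x)))).
- intros u x. unfold gg. auto_derive; auto. change (x * (x * 1)) with (x ^ 2); ring.
- intros u x. unfold gg. c2d.
- intros u; apply cont_ex_RInt, cosg_cont.
Qed.

Lemma GA_ibp A t : RInt (fun x => - (x * gg al x * sin (t * x))) (- A) A
   = (2 * gg al A * sin (t * A) - t * GA A t) / (2 * al).
Proof.
assert (H := is_RInt_derive (V:=R_CompleteNormedModule) (fun x => gg al x * sin (t * x))
   (fun x => plus (scal (2 * al) (- (x * gg al x * sin (t * x)))) (scal t (cosg t x))) (- A) A).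
assert (Hex1 : ex_RInt (fun x => - (x * gg al x * sin (t * x))) (- A) A).
{ apply cont_ex_RInt; intros; apply excont; unfold gg; auto_derive; auto. }
assert (Hex2 : ex_RInt (cosg t) (- A) A) by (apply cont_ex_RInt, cosg_cont).
apply (is_RInt_unique (V:=R_CompleteNormedModule)) in H.
- rewrite (RInt_plus (V:=R_CompleteNormedModule)) in H.
  + rewrite !(RInt_scal (V:=R_CompleteNormedModule)) in H by auto.
    unfold GA. rewrite gg_even in H.
    replace (t * - A) with (- (t * A)) in H by ring. rewrite sin_neg in H.
    unfold plus, scal, minus, opp in H; simpl in H; unfold mult in H; simpl in H.
    toR. revert H. generalize (RInt (fun x : R => - (x * gg al x * sin (t * x))) (- A) A) (RInt (cosg t) (- A) A). intros r1 r2 H. apply Rmult_eq_reg_l with (2 * al); [|lra]. replace (2 * al * ((2 * gg al A * sin (t * A) - t * r2) / (2 * al))) with (2 * gg al A * sin (t * A) - t * r2) by (field; lra). unfold plus in H; simpl in H. lra.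
  + now apply (ex_RInt_scal (V:=R_NormedModule)).
  + now apply (ex_RInt_scal (V:=R_NormedModule)).
- intros x _. unfold cosg, plus, scal; simpl; unfold mult; simpl; unfold gg.
  auto_derive; auto. change (x * (x * 1)) with (x ^ 2); ring.
- intros x _. apply (continuous_plus (V:=R_NormedModule)).
  + apply (continuous_scal_r (V:=R_NormedModule)).
    apply excont; unfold gg; auto_derive; auto.
  + apply (continuous_scal_r (V:=R_NormedModule)), cosg_cont.
Qed.

Definition hA A t := exp (be * t ^ 2) * GA A t.

Lemma hA_deriv A t : is_derive (hA A) t (exp (be * t ^ 2) * gg al A * sin (t * A) / al).
Proof.
assert (H : is_derive (hA A) t (plus (mult (2 * be * t * exp (be * t ^ 2)) (GA A t))
    (mult (exp (be * t ^ 2)) ((2 * gg al A * sin (t * A) - t * GA A t) / (2 * al))))).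
{ unfold hA; apply (is_derive_mult (K:=R_AbsRing) (fun t => exp (be * t ^ 2)) (fun t => GA A t)).
  - auto_derive; auto. change (t * (t * 1)) with (t ^ 2). ring.
  - rewrite <- GA_ibp. apply GA_deriv.
  - intros; apply Rmult_comm. }
replace (exp (be * t ^ 2) * gg al A * sin (t * A) / al) with
  (plus (mult (2 * be * t * exp (be * t ^ 2)) (GA A t))
    (mult (exp (be * t ^ 2)) ((2 * gg al A * sin (t * A) - t * GA A t) / (2 * al)))); auto.
unfold plus, mult; simpl. unfold be. field. lra.
Qed.

Lemma GA0 A : GA A 0 = 2 * JJ al A.
Proof.
unfold GA. rewrite (RInt_ext _ (gg al)).
- rewrite <- (RInt_Chasles (V:=R_CompleteNormedModule) (gg al) (- A) 0 A) by (apply gg_ex; exact Hal).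
  rewrite RInt_even; [|intros; apply gg_cont; exact Hal|apply gg_even].
  unfold JJ, plus; simpl. ring.
- intros x _. toR. unfold cosg. rewrite Rmult_0_l, cos_0; ring.
Qed.

Lemma hA_bound A t : 0 <= A ->
  Rabs (hA A t - hA A 0) <= exp (be * t ^ 2) * gg al A / al * Rabs (t - 0).
Proof.
intros HA.
apply (deriv_bound (hA A) (fun u => exp (be * u ^ 2) * gg al A * sin (u * A) / al)).
- intros; apply hA_deriv.
- intros u; apply excont; auto_derive; auto.
- intros u Hu.
  assert (Hu2 : u ^ 2 <= t ^ 2).
  { destruct (Rle_dec 0 t).
    - rewrite Rmin_left, Rmax_right in Hu by lra. simpl; nra.
    - rewrite Rmin_right, Rmax_left in Hu by lra. simpl; nra. }
  assert (Hbe : 0 < be) by (unfold be; apply Rinv_0_lt_compat; lra).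
  assert (He : exp (be * u ^ 2) <= exp (be * t ^ 2)).
  { destruct (Rle_lt_or_eq_dec _ _ Hu2) as [Hl|Hl].
    - left; apply exp_increasing; nra.
    - rewrite Hl; lra. }
  unfold Rdiv.
  rewrite Rabs_mult, Rabs_mult, Rabs_mult.
  rewrite (Rabs_right (exp _)) by (left; apply exp_pos).
  rewrite (Rabs_right (gg al A)) by (left; apply gg_pos).
  rewrite (Rabs_right (/ al)) by (left; apply Rinv_0_lt_compat; lra).
  assert (Hs := Rabs_le _ _ (SIN_bound (u * A))). 
  assert (Hs2 : Rabs (sin (u * A)) <= 1) by (apply Rabs_le; apply SIN_bound).
  assert (0 < / al) by (apply Rinv_0_lt_compat; lra).
  assert (0 < gg al A) by apply gg_pos.
  assert (0 < exp (be * u ^ 2)) by apply exp_pos.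
  apply Rmult_le_compat_r; [lra|].
  rewrite <- (Rmult_1_r (exp (be * t ^ 2) * gg al A)).
  apply Rmult_le_compat; try nra. apply Rabs_pos.
Qed.
End Fourier.

Section F2.
Variable al : R.
Hypothesis Hal : 0 < al.

Lemma GA_lim t eps : 0 < eps -> exists M, 0 < M /\ forall A, M <= A ->
  Rabs (GA al A t - 2 * LL al * exp (- (be al * t ^ 2))) < eps.
Proof.
intros He.
set (D := exp (be al * t ^ 2) / al * Rabs t).
assert (HD : 0 <= D).
{ unfold D. apply Rmult_le_pos; [|apply Rabs_pos]. apply Rlt_le, Rdiv_lt_0_compat; [apply exp_pos|lra]. }
destruct (gg_small al Hal (eps / (2 * (D + 1)))) as [M1 [HM1 HM1x]].
{ apply Rdiv_lt_0_compat; lra. }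
destruct (JJ_lim al Hal (eps / 4)) as [M2 [HM2 HM2x]]; [lra|].
exists (Rmax M1 M2); split; [apply (Rlt_le_trans _ M1); [lra|apply Rmax_l]|].
intros A HA.
assert (HA1 : M1 <= A) by (apply (Rle_trans _ (Rmax M1 M2)); [apply Rmax_l|lra]).
assert (HA2 : M2 <= A) by (apply (Rle_trans _ (Rmax M1 M2)); [apply Rmax_r|lra]).
specialize (HM1x A HA1). specialize (HM2x A HA2).
assert (Hb := hA_bound al Hal A t ltac:(lra)).
assert (Eg : GA al A t = exp (- (be al * t ^ 2)) * hA al A t).
{ unfold hA. rewrite <- Rmult_assoc, <- exp_plus.
  replace (- (be al * t ^ 2) + be al * t ^ 2) with 0 by ring. rewrite exp_0; ring. }
assert (E0 : hA al A 0 = 2 * JJ al A).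
{ unfold hA. rewrite GA0 by auto. replace (be al * 0 ^ 2) with 0 by ring. rewrite exp_0; ring. }
rewrite Eg, E0 in *.
assert (Hx : 0 < exp (- (be al * t ^ 2)) <= 1).
{ split; [apply exp_pos|]. rewrite <- exp_0. 
  assert (0 <= be al * t ^ 2).
  { apply Rmult_le_pos; [unfold be; left; apply Rinv_0_lt_compat; lra|]. 
    apply pow2_ge_0. }
  destruct (Rle_lt_or_eq_dec _ _ H) as [Hl|Hl].
  - left; apply exp_increasing; lra.
  - rewrite <- Hl. right; f_equal; ring. }
replace (exp (- (be al * t ^ 2)) * hA al A t - 2 * LL al * exp (- (be al * t ^ 2)))
  with (exp (- (be al * t ^ 2)) * (hA al A t - 2 * LL al)) by ring.
rewrite Rabs_mult, (Rabs_right (exp _)) by lra.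
assert (Hk : Rabs (hA al A t - 2 * LL al) < eps).
{ replace (hA al A t - 2 * LL al) with ((hA al A t - 2 * JJ al A) + 2 * (JJ al A - LL al)) by ring.
  eapply Rle_lt_trans; [apply Rabs_triang|].
  rewrite Rabs_mult, (Rabs_right 2) by lra.
  replace (Rabs (t - 0)) with (Rabs t) in Hb by (f_equal; ring).
  assert (Hb2 : exp (be al * t ^ 2) * gg al A / al * Rabs t = D * gg al A).
  { unfold D. field. lra. }
  rewrite Hb2 in Hb.
  assert (D * gg al A <= D * (eps / (2 * (D + 1)))).
  { apply Rmult_le_compat_l; auto. unfold gg; lra. }
  assert (D * (eps / (2 * (D + 1))) < eps / 2).
  { apply (Rmult_lt_reg_r (2 * (D + 1))); [lra|].
    unfold Rdiv. field_simplify; lra. }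
  lra. }
assert (0 <= Rabs (hA al A t - 2 * LL al)) by apply Rabs_pos.
nra.
Qed.

End F2.

Definition Pimp (f : R -> R) (l : R) :=
  (forall a b, ex_RInt f a b) /\
  (forall eps, 0 < eps -> exists M, 0 <= M /\ forall a b, a <= - M -> M <= b ->
     Rabs (RInt f a b - l) < eps).

Lemma Pimp_is_RInt_R f l : Pimp f l -> is_RInt_R f l.
Proof.
intros [H1 H2]; split.
- intros a b _; constructor; apply ex_RInt_Reals_0, H1.
- intros eps He; destruct (H2 eps He) as [M [HM HMx]]; exists M.
  intros a b pr Ha Hb. rewrite <- RInt_Reals. now apply HMx.
Qed.

Lemma Pimp_ext f g l : (forall x, f x = g x) -> Pimp f l -> Pimp g l.
Proof.
intros E [H1 H2]; split.
- intros a b; apply (ex_RInt_ext (V:=R_NormedModule) f); auto.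
- intros eps He; destruct (H2 eps He) as [M [HM HMx]]; exists M; split; auto.
  intros a b Ha Hb. rewrite <- (RInt_ext f); auto.
Qed.

Lemma Pimp_plus f g l1 l2 : Pimp f l1 -> Pimp g l2 -> Pimp (fun x => f x + g x) (l1 + l2).
Proof.
intros [H1 H2] [K1 K2]; split.
- intros a b; apply (ex_RInt_plus (V:=R_NormedModule) f g); auto.
- intros eps He; destruct (H2 (eps/2) ltac:(lra)) as [M [HM HMx]];
  destruct (K2 (eps/2) ltac:(lra)) as [N [HN HNx]].
  exists (Rmax M N); split; [apply (Rle_trans _ M); [auto|apply Rmax_l]|].
  intros a b Ha Hb.
  assert (HMa : a <= - M) by (assert (M <= Rmax M N) by apply Rmax_l; lra).
  assert (HNa : a <= - N) by (assert (N <= Rmax M N) by apply Rmax_r; lra).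
  assert (HMb : M <= b) by (assert (M <= Rmax M N) by apply Rmax_l; lra).
  assert (HNb : N <= b) by (assert (N <= Rmax M N) by apply Rmax_r; lra).
  assert (E := RInt_plus (V:=R_CompleteNormedModule) f g a b (H1 a b) (K1 a b)).
  unfold plus in E; simpl in E. rewrite E.
  specialize (HMx a b HMa HMb); specialize (HNx a b HNa HNb).
  replace (RInt f a b + RInt g a b - (l1 + l2)) with ((RInt f a b - l1) + (RInt g a b - l2)) by ring.
  eapply Rle_lt_trans; [apply Rabs_triang|lra].
Qed.

Lemma Pimp_scal c f l : Pimp f l -> Pimp (fun x => c * f x) (c * l).
Proof.
intros [H1 H2]; split.
- intros a b; apply (ex_RInt_scal (V:=R_NormedModule) f); auto.
- intros eps He; destruct (H2 (eps / (Rabs c + 1))) as [M [HM HMx]].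
  { apply Rdiv_lt_0_compat; [lra|]. assert (H := Rabs_pos c); lra. }
  exists M; split; auto. intros a b Ha Hb.
  assert (E := RInt_scal (V:=R_CompleteNormedModule) f a b c (H1 a b)).
  unfold scal in E; simpl in E; unfold mult in E; simpl in E. rewrite E.
  rewrite <- Rmult_minus_distr_l, Rabs_mult.
  specialize (HMx a b Ha Hb).
  assert (H := Rabs_pos c).
  assert (Rabs c * Rabs (RInt f a b - l) <= Rabs c * (eps / (Rabs c + 1))).
  { apply Rmult_le_compat_l; lra. }
  assert (Rabs c * (eps / (Rabs c + 1)) < eps).
  { apply (Rmult_lt_reg_r (Rabs c + 1)); [lra|]. unfold Rdiv. field_simplify; lra. }
  lra.
Qed.

Section D.
Variable al : R.
Hypothesis Hal : 0 < al.

Lemma tail_bound (f : R -> R) c d : c <= d -> (forall x, continuous f x) ->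
  (forall x, Rabs (f x) <= gg al x) -> Rabs (RInt f c d) <= RInt (gg al) c d.
Proof.
intros Hcd Hc Hb.
assert (Hf : ex_RInt f c d) by (apply cont_ex_RInt, Hc).
assert (Hg : ex_RInt (gg al) c d) by (apply gg_ex).
apply Rabs_le; split.
- assert (E := RInt_opp (V:=R_CompleteNormedModule) (gg al) c d Hg).
  unfold opp in E; simpl in E.
  change (- RInt (gg al) c d <= RInt f c d). rewrite <- E.
  apply RInt_le; auto.
  + apply (ex_RInt_opp (V:=R_NormedModule)); auto.
  + intros x _. specialize (Hb x). apply Rabs_le_between in Hb. unfold opp; simpl. lra.
- apply RInt_le; auto. intros x _. specialize (Hb x). apply Rabs_le_between in Hb. lra.
Qed.

Lemma RInt_gg_split c d : RInt (gg al) c d = JJ al d - JJ al c.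
Proof.
assert (E := RInt_Chasles (V:=R_CompleteNormedModule) (gg al) 0 c d (gg_ex al _ _) (gg_ex al _ _)).
unfold plus in E; simpl in E. unfold JJ. 
assert (E2 := opp_RInt_swap (V:=R_CompleteNormedModule) (gg al) c 0 (gg_ex al _ _)).
unfold opp in E2; simpl in E2.
change (RInt (gg al) c d = RInt (gg al) 0 d - RInt (gg al) 0 c). lra.
Qed.

Lemma JJ_odd c : JJ al (- c) = - JJ al c.
Proof.
unfold JJ.
assert (E := RInt_even (gg al) c (gg_cont al) (gg_even al)).
assert (E2 := opp_RInt_swap (V:=R_CompleteNormedModule) (gg al) (- c) 0 (gg_ex al _ _)).
unfold opp in E2; simpl in E2.
change (RInt (gg al) 0 (- c) = - RInt (gg al) 0 c). lra.
Qed.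

Lemma Pimp_of_sym (f : R -> R) l : (forall x, continuous f x) ->
  (forall x, Rabs (f x) <= gg al x) ->
  (forall eps, 0 < eps -> exists M, 0 < M /\ forall A, M <= A -> Rabs (RInt f (- A) A - l) < eps) ->
  Pimp f l.
Proof.
intros Hc Hb Hs. split.
- intros; apply cont_ex_RInt, Hc.
- intros eps He.
  destruct (Hs (eps / 2) ltac:(lra)) as [M1 [HM1 HM1x]].
  destruct (JJ_lim al Hal (eps / 8) ltac:(lra)) as [M2 [HM2 HM2x]].
  set (A := Rmax M1 M2).
  assert (HA1 : M1 <= A) by apply Rmax_l. assert (HA2 : M2 <= A) by apply Rmax_r.
  exists A; split; [lra|]. intros a b Ha Hb'.
  assert (Ex : forall c d, ex_RInt f c d) by (intros; apply cont_ex_RInt, Hc).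
  assert (E1 := RInt_Chasles (V:=R_CompleteNormedModule) f a (- A) b (Ex _ _) (Ex _ _)).
  assert (E2 := RInt_Chasles (V:=R_CompleteNormedModule) f (- A) A b (Ex _ _) (Ex _ _)).
  unfold plus in E1, E2; simpl in E1, E2.
  change (Rabs (RInt f a b - l) < eps). rewrite <- E1, <- E2.
  assert (T1 := tail_bound f a (- A) ltac:(lra) Hc Hb).
  assert (T2 := tail_bound f A b ltac:(lra) Hc Hb).
  rewrite RInt_gg_split in T1, T2.
  replace (JJ al (- A)) with (- JJ al A) in T1 by (symmetry; apply JJ_odd).
  replace (JJ al a) with (- JJ al (- a)) in T1 by (rewrite JJ_odd; ring).
  assert (K1 := HM2x (- a) ltac:(lra)). assert (K2 := HM2x b ltac:(lra)).
  assert (K3 := HM2x A ltac:(lra)). assert (K4 := HM1x A HA1).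
  apply Rabs_lt_between in K1. apply Rabs_lt_between in K2. apply Rabs_lt_between in K3.
  apply Rabs_le_between in T1. apply Rabs_le_between in T2. apply Rabs_lt_between in K4.
  apply Rabs_lt_between. change (RInt f (- A) A) with (RInt f (- A) A) in *. lra.
Qed.

Lemma Pimp_cos t : Pimp (cosg al t) (2 * LL al * exp (- (be al * t ^ 2))).
Proof.
apply Pimp_of_sym.
- apply cosg_cont.
- intros x; unfold cosg. rewrite Rabs_mult, (Rabs_right (gg al x)) by (left; apply gg_pos).
  assert (Rabs (cos (t * x)) <= 1) by (apply Rabs_le, COS_bound).
  assert (0 < gg al x) by apply gg_pos. nra.
- intros eps He. apply (GA_lim al Hal t eps He).
Qed.

Lemma Pimp_sin t : Pimp (sing al t) 0.
Proof.
apply Pimp_of_sym.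
- apply sing_cont.
- intros x; unfold sing. rewrite Rabs_mult, (Rabs_right (gg al x)) by (left; apply gg_pos).
  assert (Rabs (sin (t * x)) <= 1) by (apply Rabs_le, SIN_bound).
  assert (0 < gg al x) by apply gg_pos. nra.
- intros eps He. exists 1; split; [lra|]. intros A _.
  rewrite RInt_odd; [rewrite Rminus_0_r, Rabs_R0; lra| |].
  + apply sing_cont.
  + intros x; unfold sing. rewrite gg_even. replace (t * - x) with (- (t * x)) by ring.
    rewrite sin_neg; ring.
Qed.
End D.

Section Q.
Variable q : R.
Hypothesis Hq : 0 < q < 1.

Lemma Rpower_pos' x : 0 < Rpower q x.
Proof. unfold Rpower; apply exp_pos. Qed.

Lemma qnum_pos j : (0 < j)%nat -> 0 < qnum q j.
Proof.
intros Hj. unfold qnum. assert (H := pow_lt_1_compat q j ltac:(lra) Hj).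
apply Rdiv_lt_0_compat; lra.
Qed.

Lemma qfact_pos j : 0 < qfact q j.
Proof.
induction j; simpl; [lra|]. apply Rmult_lt_0_compat; auto. apply qnum_pos; lia.
Qed.

Lemma qdfact_pos j : 0 < qdfact q j.
Proof.
induction j; simpl; [lra|]. apply Rmult_lt_0_compat; auto. apply qnum_pos; lia.
Qed.

Lemma invpow j : (/ q) ^ j = Rpower q (- INR j).
Proof. rewrite Rpower_Ropp, Rpower_pow by lra. apply pow_inv. Qed.

Lemma qnum_inv j : qnum (/ q) j = Rpower q (1 - INR j) * qnum q j.
Proof.
unfold Rminus. rewrite Rpower_plus, Rpower_1, Rpower_Ropp, Rpower_pow by lra.
unfold qnum. rewrite pow_inv.
assert (0 < q ^ j) by (apply pow_lt; lra).
field. lra.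
Qed.

Lemma qfact_inv j : qfact (/ q) j = Rpower q (- (INR j * (INR j - 1) / 2)) * qfact q j.
Proof.
induction j as [|j IH].
- simpl. replace (- (0 * (0 - 1) / 2)) with 0 by field. rewrite Rpower_O by lra. ring.
- simpl qfact. rewrite IH, qnum_inv.
  replace (- (INR (S j) * (INR (S j) - 1) / 2)) with
     ((- (INR j * (INR j - 1) / 2)) + (1 - INR (S j))) by (rewrite S_INR; field).
  rewrite Rpower_plus. ring.
Qed.

Lemma qdfact_inv j : qdfact (/ q) j = Rpower q (- (INR j ^ 2)) * qdfact q j.
Proof.
induction j as [|j IH].
- simpl qdfact. replace (- (INR 0 ^ 2)) with 0 by (simpl; ring). rewrite Rpower_O by lra. ring.
- simpl qdfact. rewrite IH, qnum_inv.
  replace (- (INR (S j) ^ 2)) with ((- (INR j ^ 2)) + (1 - INR (2 * S j))) by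
    (rewrite mult_INR, !S_INR; simpl; ring).
  change (2 * S j)%nat with (S (j + S (j + 0))). rewrite Rpower_plus. ring.
Qed.

Lemma INR_kk k : INR (k * (k - 1)) = INR k * INR k - INR k.
Proof.
destruct k as [|k]; [simpl; ring|].
rewrite mult_INR. replace (S k - 1)%nat with k by lia. rewrite S_INR; ring.
Qed.

Lemma cnk_inv n k : (2 * k <= n)%nat ->
  cnk n k q = cnk n k (/ q) * Rpower q (2 * INR n * INR k - 3 * INR k - INR k ^ 2).
Proof.
intros Hk. unfold cnk.
rewrite invpow, !qfact_inv, qdfact_inv.
rewrite <- (Rpower_pow _ q) by lra. rewrite INR_kk.
assert (Hm : INR (n - 2 * k) = INR n - 2 * INR k) by (rewrite minus_INR, mult_INR by lia; simpl; ring).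
rewrite Hm.
set (a := INR n); set (b := INR k).
assert (key : Rpower q (b * b - b) * Rpower q (- ((a - 2 * b) * (a - 2 * b - 1) / 2)) * Rpower q (- (b ^ 2))
   = Rpower q (- (b * b - b)) * Rpower q (- (a * (a - 1) / 2)) * Rpower q (2 * a * b - 3 * b - b ^ 2)).
{ rewrite <- !Rpower_plus. f_equal. field. }
assert (P1 := Rpower_pos' (b * b - b)).
assert (P2 := Rpower_pos' (- ((a - 2 * b) * (a - 2 * b - 1) / 2))).
assert (P3 := Rpower_pos' (- (b ^ 2))).
assert (P4 := qfact_pos n). assert (P5 := qfact_pos (n - 2 * k)). assert (P6 := qdfact_pos k).
revert key P1 P2 P3.
generalize (Rpower q (b * b - b)) (Rpower q (- ((a - 2 * b) * (a - 2 * b - 1) / 2)))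
  (Rpower q (- (b ^ 2))) (Rpower q (- (b * b - b))) (Rpower q (- (a * (a - 1) / 2)))
  (Rpower q (2 * a * b - 3 * b - b ^ 2)).
intros e1 e2 e3 e4 e5 e6 key P1 P2 P3.
replace e1 with (e4 * e5 * e6 / (e2 * e3)) by (rewrite <- key; field; lra).
field. lra.
Qed.
End Q.

Lemma Cexpi_add a b : Cexpi (a + b) = Cmul (Cexpi a) (Cexpi b).
Proof. unfold Cexpi, Cmul; simpl. rewrite cos_plus, sin_plus. f_equal; ring. Qed.

Lemma Cpow_mul_expi b th m : Cpow (Cmul b (Cexpi th)) m = Cmul (Cpow b m) (Cexpi (INR m * th)).
Proof.
induction m as [|m IH].
- simpl. unfold Cmul, Cexpi, C1; simpl. rewrite Rmult_0_l, cos_0, sin_0. f_equal; ring.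
- simpl Cpow. rewrite IH, S_INR.
  replace ((INR m + 1) * th) with (th + INR m * th) by ring. rewrite Cexpi_add.
  destruct b as [b1 b2]. destruct (Cpow (b1, b2) m) as [p1 p2].
  unfold Cmul, Cexpi; simpl. f_equal; ring.
Qed.

Lemma Cpow_scal c b m : Cpow (Cscal c b) m = Cscal (c ^ m) (Cpow b m).
Proof.
induction m as [|m IH]; simpl.
- unfold Cscal, C1; simpl; f_equal; ring.
- rewrite IH. destruct b as [b1 b2]; destruct (Cpow (b1, b2) m) as [p1 p2].
  unfold Cscal, Cmul; simpl; f_equal; ring.
Qed.

Lemma Cscal_Cscal a b z : Cscal a (Cscal b z) = Cscal (a * b) z.
Proof. destruct z; unfold Cscal; simpl; f_equal; ring. Qed.

Lemma Cmul_Csum_l F N w : Cmul (Csum F N) w = Csum (fun k => Cmul (F k) w) N.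
Proof.
induction N as [|N IH]; simpl.
- destruct w; unfold Cmul, C0; simpl; f_equal; ring.
- rewrite <- IH. destruct (Csum F N), (F N), w. unfold Cmul, Cadd; simpl; f_equal; ring.
Qed.

Lemma Cscal_Csum c F N : Cscal c (Csum F N) = Csum (fun k => Cscal c (F k)) N.
Proof.
induction N as [|N IH]; simpl.
- unfold Cscal, C0; simpl; f_equal; ring.
- rewrite <- IH. destruct (Csum F N), (F N). unfold Cscal, Cadd; simpl; f_equal; ring.
Qed.

Lemma Csum_ext F G N : (forall k, (k < N)%nat -> F k = G k) -> Csum F N = Csum G N.
Proof.
induction N as [|N IH]; intros H; simpl; auto.
rewrite IH by (intros; apply H; lia). rewrite H by lia. reflexivity.
Qed.

Definition CP (f : R -> Cplx) (l : Cplx) :=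
  Pimp (fun x => Cre (f x)) (Cre l) /\ Pimp (fun x => Cim (f x)) (Cim l).

Lemma CP_is f l : CP f l -> is_CInt_R f l.
Proof. intros [H1 H2]; split; apply Pimp_is_RInt_R; auto. Qed.

Lemma Pimp_eqv f l l' : l = l' -> Pimp f l -> Pimp f l'.
Proof. intros ->; auto. Qed.

Lemma CP_ext f g l : (forall x, f x = g x) -> CP f l -> CP g l.
Proof.
intros E [H1 H2]; split; eapply Pimp_ext; eauto; intros; simpl; rewrite E; auto.
Qed.

Lemma CP_scal c f l : CP f l -> CP (fun x => Cscal c (f x)) (Cscal c l).
Proof. intros [H1 H2]; split; apply Pimp_scal; auto. Qed.

Lemma CP_add f g l1 l2 : CP f l1 -> CP g l2 -> CP (fun x => Cadd (f x) (g x)) (Cadd l1 l2).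
Proof. intros [H1 H2] [K1 K2]; split; apply Pimp_plus; auto. Qed.

Lemma CP_zero : CP (fun _ => C0) C0.
Proof.
assert (H : Pimp (fun _ => 0) 0).
{ eapply Pimp_ext; [|eapply Pimp_eqv; [|apply (Pimp_scal 0 _ _ (Pimp_sin 1 Rlt_0_1 0))]].
  - intros; simpl; ring.
  - ring. }
split; exact H.
Qed.

Lemma CP_sum F L N : (forall k, CP (F k) (L k)) ->
  CP (fun x => Csum (fun k => F k x) N) (Csum L N).
Proof.
intros H; induction N as [|N IH]; simpl.
- apply CP_zero.
- apply CP_add; auto.
Qed.

Lemma CP_basic al (Hal : 0 < al) B tau :
  CP (fun x => Cscal (gg al x) (Cmul B (Cexpi (tau * x))))
     (Cscal (2 * LL al * exp (- (be al * tau ^ 2))) B).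
Proof.
destruct B as [b1 b2]. split.
- eapply Pimp_ext; [|eapply Pimp_eqv; [|apply (Pimp_plus _ _ _ _ (Pimp_scal b1 _ _ (Pimp_cos al Hal tau)) (Pimp_scal (- b2) _ _ (Pimp_sin al Hal tau)))]].
  + intros x; unfold cosg, sing, Cscal, Cmul, Cexpi; simpl; ring.
  + unfold Cscal; simpl; ring.
- eapply Pimp_ext; [|eapply Pimp_eqv; [|apply (Pimp_plus _ _ _ _ (Pimp_scal b2 _ _ (Pimp_cos al Hal tau)) (Pimp_scal b1 _ _ (Pimp_sin al Hal tau)))]].
  + intros x; unfold cosg, sing, Cscal, Cmul, Cexpi; simpl; ring.
  + unfold Cscal; simpl; ring.
Qed.

Lemma CP_eqv f l l' : l = l' -> CP f l -> CP f l'.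
Proof. intros ->; auto. Qed.

Lemma exp_pow' a k : exp a ^ k = exp (INR k * a).
Proof.
induction k as [|k IH]; simpl pow.
- simpl. rewrite Rmult_0_l, exp_0; reflexivity.
- rewrite IH, S_INR, <- exp_plus. f_equal; ring.
Qed.

Theorem mainTheorem11 (s kappa : R) (b : Cplx) (n : nat) (y : R) :
  0 < s -> 0 < kappa ->
  let q := exp (- (2 * s * kappa ^ 2)) in
  is_CInt_R
    (fun x : R =>
       Cscal (/ sqrt (2 * PI * s) * exp (- (x ^ 2 / (2 * s))))
         (Cmul (Hq n (Cmul b (Cexpi (kappa * x))) s q) (Cexpi (x * y))))
    (Cscal (Rpower q (INR n ^ 2 / 4) * exp (- (s * y ^ 2 / 2)))
       (Hq n (Cscal (exp (- (s * kappa * y))) b) (Rpower q (INR n - 3) * s) (/ q))).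
Proof.
intros Hs Hk q.
set (al := / (2 * s)).
assert (Hal : 0 < al) by (unfold al; apply Rinv_0_lt_compat; lra).
set (C0' := / sqrt (2 * PI * s)).
set (N := S (Nat.div2 n)).
apply CP_is.
eapply CP_ext; [|eapply CP_eqv; [|apply (CP_sum
  (fun k x => Cscal (C0' * (cnk n k q * s ^ k)) (Cscal (gg al x) (Cmul (Cpow b (n - 2 * k)) (Cexpi ((INR (n - 2 * k) * kappa + y) * x)))))
  (fun k => Cscal (C0' * (cnk n k q * s ^ k)) (Cscal (2 * LL al * exp (- (be al * (INR (n - 2 * k) * kappa + y) ^ 2))) (Cpow b (n - 2 * k))))
  N)]].
- intros x. unfold Hq. fold N. rewrite Cmul_Csum_l, Cscal_Csum. apply Csum_ext; intros k _.
  rewrite Cpow_mul_expi.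
  replace ((INR (n - 2 * k) * kappa + y) * x) with (INR (n - 2 * k) * (kappa * x) + x * y) by ring.
  rewrite Cexpi_add.
  replace (gg al x) with (exp (- (x ^ 2 / (2 * s)))) by (unfold gg, al; f_equal; field; lra).
  destruct (Cpow b (n - 2 * k)) as [p1 p2].
  destruct (Cexpi (INR (n - 2 * k) * (kappa * x))) as [u1 u2].
  destruct (Cexpi (x * y)) as [v1 v2].
  unfold Cscal, Cmul; simpl; f_equal; ring.
- unfold Hq. fold N. rewrite Cscal_Csum. apply Csum_ext; intros k Hk'.
  assert (Hk2 : (2 * k <= n)%nat).
  { unfold N in Hk'. assert (H := Nat.div2_odd n). destruct (Nat.odd n); simpl in H; lia. }
  rewrite Cpow_scal, !Cscal_Cscal. f_equal.
  assert (Hq01 : 0 < q < 1).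
  { unfold q; split; [apply exp_pos|]. rewrite <- exp_0. apply exp_increasing.
    assert (0 < kappa ^ 2) by (apply pow_lt; lra). nra. }
  rewrite (cnk_inv q Hq01 n k Hk2).
  assert (E2L : 2 * LL al = sqrt (2 * PI * s)).
  { unfold LL. replace (PI / al) with (2 * PI * s) by (unfold al; field; lra). field. }
  assert (Ebe : be al = s / 2) by (unfold be, al; field; lra).
  assert (EC : C0' * sqrt (2 * PI * s) = 1).
  { unfold C0'. field. apply Rgt_not_eq, sqrt_lt_R0. assert (H := PI_RGT_0). nra. }
  assert (Eln : ln q = - (2 * s * kappa ^ 2)) by (unfold q; apply ln_exp).
  assert (Hm : INR (n - 2 * k) = INR n - 2 * INR k) by (rewrite minus_INR, mult_INR by lia; simpl; ring).
  rewrite E2L, Ebe, Hm. unfold Rpower. rewrite Eln.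
  rewrite Rpow_mult_distr, !exp_pow', Hm.
  set (a := INR n); set (c := INR k).
  set (cc := cnk n k (/ q)).
  assert (Ee : exp ((2 * a * c - 3 * c - c ^ 2) * - (2 * s * kappa ^ 2)) * exp (- (s / 2 * ((a - 2 * c) * kappa + y) ^ 2))
     = exp (a ^ 2 / 4 * - (2 * s * kappa ^ 2)) * exp (- (s * y ^ 2 / 2)) * exp (c * ((a - 3) * - (2 * s * kappa ^ 2))) * exp ((a - 2 * c) * - (s * kappa * y))).
  { rewrite <- !exp_plus. f_equal. field. }
  transitivity (cc * s ^ k * (C0' * sqrt (2 * PI * s)) *
     (exp ((2 * a * c - 3 * c - c ^ 2) * - (2 * s * kappa ^ 2)) * exp (- (s / 2 * ((a - 2 * c) * kappa + y) ^ 2)))).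
  + ring.
  + rewrite EC, Ee. ring.
- intros k. apply CP_scal, (CP_basic al Hal).
Qed.
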